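(* In the setting below, suppose there is a reparametrization $\eta=\eta(\theta)$ of $\Theta$ (a twice differentiable map with twice differentiable inverse) such that for every $\theta\in\Theta$ and all $k,l$ the quantity $$\frac{\partial^2}{\partial\eta^k\partial\eta^l}f(m_\theta(a))$$ does not depend on $a\in A$. Then for all $\theta$, all $x\in{\cal F}_\theta$ and all $k,l$, $\sum_a[x(a)-m_\theta(a)]\frac{\partial^2}{\partial\theta^k\partial\theta^l}f(m_\theta(a))=0$; consequently the model belongs to a generalized exponential family, with Fisher information $I_{k,l}(\theta)=\sum_af'(m_\theta(a))\frac{\partial m_\theta(a)}{\partial\theta^k}\frac{\partial m_\theta(a)}{\partial\theta^l}$.
   Context: Setting: $A$ is a finite alphabet, ${\mathbb X}$ the set of probability distributions on $A$ with strictly positive entries, $\langle x|q\rangle=\sum_a x(a)q(a)$. $F:(0,1]\to{\mathbb R}$ is strictly convex and twice differentiable with $f=F'$. $\theta\in\Theta\mapsto m_\theta\in{\mathbb X}$ ($\Theta\subset{\mathbb R}^n$ open) is injective with $\theta\mapsto m_\theta(a)$ twice differentiable for each $a$. The Bregman divergence is $D(x\|\theta)=\sum_a[F(x(a))-F(m_\theta(a))-(x(a)-m_\theta(a))f(m_\theta(a))]$; it is assumed that for every $x\in{\mathbb X}$, $\theta\mapsto D(x\|\theta)$ has a unique minimizer $\theta(x)\in\Theta$, $\mu(x)=m_{\theta(x)}$, and ${\cal F}_\theta=\{x:\mu(x)=m_\theta\}$. The generalized Fisher information is $I_{k,l}(x)=\frac{\partial^2}{\partial\theta^k\partial\theta^l}D(x\|\theta)\big|_{m_\theta=\mu(x)}$,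 and the model belongs to a generalized exponential family if $I_{k,l}$ is constant on each fiber ${\cal F}_\theta$. *)

(* Defs.v *)
From mathcomp Require Import all_boot.
From Stdlib Require Import Reals.
Set Implicit Arguments. Unset Strict Implicit.
Open Scope R_scope.

Definition sumR {X : Type} (l : list X) (g : X -> R) : R :=
  foldr (fun x acc => g x + acc) 0 l.

Definition vec (n : nat) := 'I_n -> R.
Definition vadd {n} (u v : vec n) : vec n := fun j => u j + v j.
Definition vnorm {n} (h : vec n) : R := sumR (enum 'I_n) (fun j => Rabs (h j)).
Definition vdot {n} (u v : vec n) : R := sumR (enum 'I_n) (fun j => u j * v j).
Definition upd {n} (th : vec n) (k : 'I_n) (t : R) : vec n :=
  fun j => th j + (if j == k then t else 0).

Definition is_open {n} (U : vec n -> Prop) : Prop :=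
  forall th, U th -> exists r, 0 < r /\ forall h : vec n, vnorm h < r -> U (vadd th h).

Definition frechet_at {n} (g : vec n -> R) (th d : vec n) : Prop :=
  forall eps, 0 < eps -> exists delta, 0 < delta /\
    forall h : vec n, vnorm h < delta ->
      Rabs (g (vadd th h) - g th - vdot d h) <= eps * vnorm h.

Definition diff_on {n} (U : vec n -> Prop) (g : vec n -> R) : Prop :=
  exists dg : vec n -> vec n, forall th, U th -> frechet_at g th (dg th).

Definition twice_diff_on {n} (U : vec n -> Prop) (g : vec n -> R) : Prop :=
  exists dg : vec n -> vec n,
    (forall th, U th -> frechet_at g th (dg th)) /\
    (forall k, diff_on U (fun th => dg th k)).

Definition is_partial {n} (g : vec n -> R) (th : vec n) (k : 'I_n) (v : R) : Prop :=
  derivable_pt_lim (fun t => g (upd th k t)) 0 v.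

Definition is_partial2 {n} (U : vec n -> Prop) (g : vec n -> R) (th : vec n)
    (k l : 'I_n) (v : R) : Prop :=
  exists h : vec n -> R,
    (forall th', U th' -> is_partial g th' l (h th')) /\ is_partial h th k v.

Definition inX {A : finType} (x : A -> R) : Prop :=
  (forall a, 0 < x a) /\ sumR (enum A) x = 1.

Definition strictly_convex_on01 (F : R -> R) : Prop :=
  forall y z t, 0 < y <= 1 -> 0 < z <= 1 -> y <> z -> 0 < t < 1 ->
    F (t * y + (1 - t) * z) < t * F y + (1 - t) * F z.

Definition bregD {A : finType} {n} (F f : R -> R) (m : vec n -> A -> R)
    (x : A -> R) (th : vec n) : R :=
  sumR (enum A) (fun a =>
    F (x a) - F (m th a) - (x a - m th a) * f (m th a)).

Definition is_argmin {n} (U : vec n -> Prop) (g : vec n -> R) (th : vec n) : Prop :=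
  U th /\ forall th', U th' -> g th <= g th'.

(* fiber F_th = { x in X | mu(x) = m_th }, mu(x) = m_{theta(x)} with theta(x) the minimizer *)
Definition in_fiber {A : finType} {n} (U : vec n -> Prop) (F f : R -> R)
    (m : vec n -> A -> R) (th : vec n) (x : A -> R) : Prop :=
  inX x /\ exists t, is_argmin U (bregD F f m x) t /\ m t = m th.

(* generalized Fisher information I_{kl}(x) equals v: second partial of
   th' |-> D(x||th') at the minimizer theta(x) *)
Definition fisher_is {A : finType} {n} (U : vec n -> Prop) (F f : R -> R)
    (m : vec n -> A -> R) (x : A -> R) (k l : 'I_n) (v : R) : Prop :=
  exists t, is_argmin U (bregD F f m x) t /\ is_partial2 U (bregD F f m x) t k l v.

Definition gen_exp_family {A : finType} {n} (U : vec n -> Prop) (F f : R -> R)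
    (m : vec n -> A -> R) : Prop :=
  forall th x y k l v w, U th -> in_fiber U F f m th x -> in_fiber U F f m th y ->
    fisher_is U F f m x k l v -> fisher_is U F f m y k l w -> v = w.

(* Main.v *)
Require Import Defs.
From mathcomp Require Import all_boot.
From Stdlib Require Import Reals Lra IndefiniteDescription FunctionalExtensionality.
Open Scope R_scope.

Section Sums.
Context {X : Type}.
Lemma sumR_nil (g : X -> R) : sumR [::] g = 0. Proof. reflexivity. Qed.
Lemma sumR_cons x l (g : X -> R) : sumR (x :: l) g = g x + sumR l g. Proof. reflexivity. Qed.
Lemma sumR_ext l (f g : X -> R) : (forall x, f x = g x) -> sumR l f = sumR l g.
Proof. intro E; induction l as [|x l IH]; rewrite ?sumR_nil ?sumR_cons ?E ?IH //. Qed.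
Lemma sumR_plus l (f g : X -> R) : sumR l (fun x => f x + g x) = sumR l f + sumR l g.
Proof. induction l as [|x l IH]; rewrite ?sumR_nil ?sumR_cons ?IH; ring. Qed.
Lemma sumR_scal_l l c (f : X -> R) : c * sumR l f = sumR l (fun x => c * f x).
Proof. induction l as [|x l IH]; rewrite ?sumR_nil ?sumR_cons -?IH; ring. Qed.
Lemma sumR_scal_r l c (f : X -> R) : sumR l f * c = sumR l (fun x => f x * c).
Proof. induction l as [|x l IH]; rewrite ?sumR_nil ?sumR_cons -?IH; ring. Qed.
Lemma sumR_zero l (f : X -> R) : (forall x, f x = 0) -> sumR l f = 0.
Proof. intro E; induction l as [|x l IH]; rewrite ?sumR_nil ?sumR_cons ?E ?IH //; ring. Qed.
Lemma sumR_opp l (f : X -> R) : sumR l (fun x => - f x) = - sumR l f.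
Proof. induction l as [|x l IH]; rewrite ?sumR_nil ?sumR_cons ?IH; ring. Qed.
Lemma sumR_minus l (f g : X -> R) : sumR l (fun x => f x - g x) = sumR l f - sumR l g.
Proof. induction l as [|x l IH]; rewrite ?sumR_nil ?sumR_cons ?IH; ring. Qed.
Lemma sumR_abs l (f : X -> R) : Rabs (sumR l f) <= sumR l (fun x => Rabs (f x)).
Proof.
induction l as [|x l IH]; rewrite ?sumR_nil ?sumR_cons.
- rewrite Rabs_R0; lra.
- eapply Rle_trans; [apply Rabs_triang|lra].
Qed.
End Sums.
Lemma sumR_swap {X Y : Type} l1 (l2 : seq Y) (f : X -> Y -> R) :
  sumR l1 (fun x => sumR l2 (fun y => f x y)) = sumR l2 (fun y => sumR l1 (fun x => f x y)).
Proof.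
induction l1 as [|x l IH].
- rewrite sumR_nil; symmetry; by apply: sumR_zero.
- rewrite sumR_cons IH -sumR_plus. apply sumR_ext => y. by rewrite sumR_cons.
Qed.

Lemma sumR_le_mem {T : eqType} (l : seq T) (g : T -> R) a :
  (forall y, 0 <= g y) -> a \in l -> g a <= sumR l g.
Proof.
intro P; induction l as [|x l IH]; first by rewrite in_nil.
rewrite in_cons sumR_cons => /orP [/eqP ->|Hl].
- have : 0 <= sumR l g.
  { clear IH. induction l as [|y l' IH']; rewrite ?sumR_nil ?sumR_cons; first lra.
    have := P y; lra. }
  lra.
- have := IH Hl; have := P x; lra.
Qed.

Lemma sumR_notin {T : eqType} (l : seq T) k (f : T -> R) :
  k \notin l -> sumR l (fun j => if j == k then f j else 0) = 0.
Proof.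
induction l as [|x l IH]; first by [].
rewrite in_cons negb_or => /andP [Hx Hl]. rewrite sumR_cons IH //.
rewrite eq_sym in Hx. rewrite (negbTE Hx); ring.
Qed.

Lemma sumR_delta {T : eqType} (l : seq T) k (f : T -> R) :
  uniq l -> k \in l -> sumR l (fun j => if j == k then f j else 0) = f k.
Proof.
induction l as [|x l IH]; first by [].
rewrite cons_uniq in_cons => /andP [Hx Hu] /orP [/eqP Hk|Hl].
- subst x. rewrite sumR_cons eqxx sumR_notin //; ring.
- rewrite sumR_cons IH //. have : x != k by apply/eqP => E; subst; rewrite Hl in Hx.
  move=> /negbTE ->; ring.
Qed.

Notation dpl := derivable_pt_lim.
Lemma dconst c x : dpl (fun _ => c) x 0. Proof. apply derivable_pt_lim_const. Qed.
Lemma did x : dpl (fun t => t) x 1. Proof. apply derivable_pt_lim_id. Qed.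
Lemma dplus f g x l1 l2 : dpl f x l1 -> dpl g x l2 -> dpl (fun t => f t + g t) x (l1 + l2).
Proof. apply derivable_pt_lim_plus. Qed.
Lemma dminus f g x l1 l2 : dpl f x l1 -> dpl g x l2 -> dpl (fun t => f t - g t) x (l1 - l2).
Proof. apply derivable_pt_lim_minus. Qed.
Lemma dmult f g x l1 l2 : dpl f x l1 -> dpl g x l2 -> dpl (fun t => f t * g t) x (l1 * g x + f x * l2).
Proof. apply derivable_pt_lim_mult. Qed.
Lemma dopp f x l : dpl f x l -> dpl (fun t => - f t) x (- l).
Proof. apply derivable_pt_lim_opp. Qed.
Lemma dcomp f g x l1 l2 : dpl g x l1 -> dpl f (g x) l2 -> dpl (fun t => f (g t)) x (l2 * l1).
Proof. apply derivable_pt_lim_comp. Qed.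
Lemma dext f g x l : (forall t, f t = g t) -> dpl f x l -> dpl g x l.
Proof. intro E. have -> : g = f by apply functional_extensionality => t; rewrite E. done. Qed.
Lemma dval f x l1 l2 : l1 = l2 -> dpl f x l1 -> dpl f x l2.
Proof. by move=> ->. Qed.
Lemma dsum {X} (l : seq X) (g : X -> R -> R) d x :
  (forall y, dpl (g y) x (d y)) -> dpl (fun t => sumR l (fun y => g y t)) x (sumR l d).
Proof.
intro D; induction l as [|y l IH].
- exact (dconst 0 x).
- apply (dplus (g y) (fun t => sumR l (fun y => g y t))); auto.
Qed.
Lemma dlocext f g x l : dpl f x l ->
  (exists d, 0 < d /\ forall t, Rabs (t - x) < d -> f t = g t) -> dpl g x l.
Proof.
intros D [d [Hd E]] eps Heps. destruct (D eps Heps) as [del Hdel].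
assert (Hm : 0 < Rmin del d) by (apply Rmin_pos; [apply del|lra]).
exists (mkposreal _ Hm) => h Hh Hlt. simpl in Hlt.
rewrite -!E. apply Hdel; auto. eapply Rlt_le_trans; [exact Hlt| apply Rmin_l].
rewrite Rminus_diag Rabs_R0; lra.
replace (x + h - x) with h by ring. eapply Rlt_le_trans; [exact Hlt| apply Rmin_r].
Qed.

Lemma Rabs_div' a b : Rabs (a / b) = Rabs a / Rabs b.
Proof. by rewrite /Rdiv Rabs_mult Rabs_inv. Qed.

Definition ek {n} (k : 'I_n) (t : R) : vec n := fun j => if j == k then t else 0.

Lemma upd0 {n} (th : vec n) k : upd th k 0 = th.
Proof. apply functional_extensionality => j. rewrite /upd. case: (j == k); ring. Qed.

Lemma vnorm_ek {n} (k : 'I_n) t : vnorm (ek k t) = Rabs t.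
Proof.
rewrite /vnorm /ek. rewrite (sumR_ext _ _ (fun j => if j == k then Rabs t else 0)).
- apply (sumR_delta _ _ (fun _ => Rabs t)); [apply enum_uniq|apply mem_enum].
- move=> j; case: (j == k) => //; apply Rabs_R0.
Qed.

Lemma vdot_ek {n} (d : vec n) k t : vdot d (ek k t) = d k * t.
Proof.
rewrite /vdot /ek. rewrite (sumR_ext _ _ (fun j => if j == k then d j * t else 0)).
- apply (sumR_delta _ _ (fun j => d j * t)); [apply enum_uniq|apply mem_enum].
- move=> j; case: (j == k) => //; ring.
Qed.

Lemma line_open {n} (U : vec n -> Prop) th k : is_open U -> U th ->
  exists d, 0 < d /\ forall t, Rabs (t - 0) < d -> U (upd th k t).
Proof.
move=> HU Hth. destruct (HU th Hth) as [r [Hr Hin]]. exists r; split => // t Ht.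
have := Hin (ek k t). rewrite vnorm_ek. rewrite Rminus_0_r in Ht. auto.
Qed.

Lemma frechet_partial {n} (g : vec n -> R) th d k : frechet_at g th d -> is_partial g th k (d k).
Proof.
move=> Fr eps Heps. destruct (Fr (eps/2)) as [del [Hdel Hb]]; first lra.
exists (mkposreal _ Hdel) => h Hh Hlt; simpl in Hlt.
rewrite upd0 Rplus_0_l.
have := Hb (ek k h). rewrite vnorm_ek vdot_ek => B. specialize (B Hlt).
change (upd th k h) with (vadd th (ek k h)).
replace ((g (vadd th (ek k h)) - g th) / h - d k) with ((g (vadd th (ek k h)) - g th - d k * h) / h)
  by (field; auto).
rewrite Rabs_div'. apply (Rmult_lt_reg_r (Rabs h)); first by apply Rabs_pos_lt.
rewrite /Rdiv Rmult_assoc Rinv_l; last by apply Rabs_no_R0.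
have := Rabs_pos_lt h Hh. nra.
Qed.

Lemma lin_bound f c : dpl f 0 c -> f 0 = 0 ->
  exists K d, 0 <= K /\ 0 < d /\ forall t, Rabs t < d -> Rabs (f t) <= K * Rabs t.
Proof.
move=> D F0. destruct (D 1 Rlt_0_1) as [del Hdel].
exists (Rabs c + 1), del; split; [have := Rabs_pos c; lra|split; [apply del|]].
move=> t Ht. destruct (Req_dec t 0) as [->|Hn].
- rewrite F0 Rabs_R0; have := Rabs_pos c; nra.
- have := Hdel t Hn Ht. rewrite Rplus_0_l F0 Rminus_0_r => B.
  have B2 : Rabs (f t / t) <= Rabs c + 1.
  { have := Rabs_triang_inv (f t / t) c. lra. }
  rewrite Rabs_div' in B2.
  have Ht0 := Rabs_pos_lt t Hn.
  apply (Rmult_le_reg_r (/ Rabs t)); first by apply Rinv_0_lt_compat.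
  rewrite Rmult_assoc Rinv_r; last lra. rewrite Rmult_1_r. exact B2.
Qed.

Lemma sum_lin_bound {X} (l : seq X) (phi : X -> R -> R) :
  (forall x, exists K d, 0 <= K /\ 0 < d /\ forall t, Rabs t < d -> Rabs (phi x t) <= K * Rabs t) ->
  exists K d, 0 <= K /\ 0 < d /\ forall t, Rabs t < d -> sumR l (fun x => Rabs (phi x t)) <= K * Rabs t.
Proof.
move=> B; induction l as [|x l [K [d [HK [Hd IH]]]]].
- exists 0, 1; split; [lra|split;[lra|]] => t _. rewrite sumR_nil; have := Rabs_pos t; nra.
- destruct (B x) as [K1 [d1 [HK1 [Hd1 B1]]]].
  exists (K1 + K), (Rmin d1 d); split; [lra|split; [by apply Rmin_pos|]] => t Ht.
  rewrite sumR_cons.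
  have := B1 t (Rlt_le_trans _ _ _ Ht (Rmin_l _ _)).
  have := IH t (Rlt_le_trans _ _ _ Ht (Rmin_r _ _)). nra.
Qed.

Lemma chain {n} (g : vec n -> R) p d (gam : R -> vec n) c :
  frechet_at g p d -> (forall j, dpl (fun t => gam t j) 0 (c j)) -> gam 0 = p ->
  dpl (fun t => g (gam t)) 0 (vdot d c).
Proof.
move=> Fr Dg G0.
pose De t : vec n := fun j => gam t j - p j.
have Ev : forall t, vadd p (De t) = gam t.
{ move=> t; apply functional_extensionality => j; rewrite /vadd /De; ring. }
pose Rm t := g (vadd p (De t)) - g p - vdot d (De t).
apply (dext (fun t => g p + vdot d (De t) + Rm t)).
{ move=> t; rewrite /Rm Ev; ring. }
apply (dval _ _ (0 + vdot d c + 0)); first ring.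
apply dplus; first apply dplus.
- apply dconst.
- apply (dsum (enum 'I_n) (fun j t => d j * (gam t j - p j)) (fun j => d j * c j)) => j.
  apply (dval _ _ (0 * (gam 0 j - p j) + d j * (c j - 0))); first by rewrite G0; ring.
  apply (dmult (fun _ => d j) (fun t => gam t j - p j)); [apply dconst| apply dminus; [apply Dg|apply dconst]].
- have R0 : Rm 0 = 0.
  { rewrite /Rm Ev G0 /vdot /De sumR_zero; first ring. move=> j; rewrite G0; ring. }
  destruct (sum_lin_bound (enum 'I_n) (fun j t => gam t j - p j)) as [K [d1 [HK [Hd1 B]]]].
  { move=> j. apply (lin_bound _ (c j - 0)).
    - apply dminus; [apply Dg|apply dconst].
    - rewrite G0; ring. }
  move=> eps Heps.
  destruct (Fr (eps / (2 * (K + 1)))) as [d2 [Hd2 Fb]].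
  { apply Rdiv_lt_0_compat; lra. }
  have Hdp : 0 < Rmin d1 (d2 / (K + 1)).
  { apply Rmin_pos; first lra. apply Rdiv_lt_0_compat; lra. }
  exists (mkposreal _ Hdp) => h Hh Hlt; simpl in Hlt.
  rewrite Rplus_0_l R0 Rminus_0_r Rminus_0_r.
  have Hl1 : Rabs h < d1 by eapply Rlt_le_trans; [exact Hlt|apply Rmin_l].
  have Hl2 : Rabs h < d2 / (K + 1) by eapply Rlt_le_trans; [exact Hlt|apply Rmin_r].
  have Bn := B h Hl1. change (sumR (enum 'I_n) (fun j => Rabs (gam h j - p j))) with (vnorm (De h)) in Bn.
  have Hah := Rabs_pos_lt h Hh.
  have Hn2 : vnorm (De h) < d2.
  { apply (Rle_lt_trans _ (K * Rabs h)) => //.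
    have : K * Rabs h <= K * (d2 / (K + 1)) by apply Rmult_le_compat_l; lra.
    have : K * (d2 / (K + 1)) < d2.
    { apply (Rmult_lt_reg_r (K + 1)); first lra.
      rewrite Rmult_assoc /Rdiv Rmult_assoc Rinv_l; lra. }
    lra. }
  have Fb' := Fb (De h) Hn2. fold (Rm h) in Fb'.
  rewrite Rabs_div'. apply (Rmult_lt_reg_r (Rabs h)) => //.
  rewrite /Rdiv Rmult_assoc Rinv_l; last lra. rewrite Rmult_1_r.
  have E2 : eps / (2 * (K + 1)) * vnorm (De h) <= eps / (2 * (K + 1)) * (K * Rabs h).
  { apply Rmult_le_compat_l => //. left; apply Rdiv_lt_0_compat; lra. }
  have E3 : eps / (2 * (K + 1)) * (K * Rabs h) < eps * Rabs h.
  { rewrite -Rmult_assoc. apply Rmult_lt_compat_r => //.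
    have Hq : eps / (2 * (K + 1)) * (2 * (K + 1)) = eps by field; lra.
    have Hq0 : 0 < eps / (2 * (K + 1)) by apply Rdiv_lt_0_compat; lra.
    nra. }
  lra.
Qed.

Lemma uniq_partial {n} (g : vec n -> R) th k v1 v2 :
  is_partial g th k v1 -> is_partial g th k v2 -> v1 = v2.
Proof. apply uniqueness_limite. Qed.

Lemma partial2_char {n} (U : vec n -> Prop) g th k l D v w :
  is_open U -> U th -> (forall th', U th' -> is_partial g th' l (D th')) ->
  is_partial D th k w -> is_partial2 U g th k l v -> v = w.
Proof.
move=> HU Hth HD Hw [h [Hh Hp]].
apply: (uniq_partial D th k) => //.
apply (dlocext (fun t => h (upd th k t))) => //.
destruct (line_open U th k HU Hth) as [d [Hd Hin]]. exists d; split => // t Ht.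
apply: (uniq_partial g _ l); [apply Hh|apply HD]; auto.
Qed.

Lemma fermat phi l : dpl phi 0 l ->
  (exists d, 0 < d /\ forall t, Rabs (t - 0) < d -> phi 0 <= phi t) -> l = 0.
Proof.
move=> D [d [Hd Hm]].
have := deriv_minimum phi (-d) d 0 (exist _ l D).
simpl. apply; try lra. move=> t H1 H2. apply Hm. rewrite Rminus_0_r. apply Rabs_def1; lra.
Qed.

Lemma dbreg {A : finType} {n} (F f : R -> R) (m : vec n -> A -> R) x th k dm dg :
  (forall a, 0 < m th a <= 1) -> (forall y, 0 < y <= 1 -> dpl F y (f y)) ->
  (forall a, is_partial (fun t => m t a) th k (dm a)) ->
  (forall a, is_partial (fun t => f (m t a)) th k (dg a)) ->
  is_partial (bregD F f m x) th k (- sumR (enum A) (fun a => (x a - m th a) * dg a)).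
Proof.
move=> Hr HF Hm Hg. rewrite /is_partial /bregD -sumR_opp.
apply (dsum (enum A) (fun a t => F (x a) - F (m (upd th k t) a) -
   (x a - m (upd th k t) a) * f (m (upd th k t) a))) => a.
apply (dval _ _ (0 - f (m (upd th k 0) a) * dm a -
   ((0 - dm a) * f (m (upd th k 0) a) + (x a - m (upd th k 0) a) * dg a))).
{ rewrite upd0; ring. }
apply dminus; first apply dminus.
- apply dconst.
- apply (dcomp F (fun t => m (upd th k t) a)); first apply Hm.
  rewrite upd0; apply HF, Hr.
- apply (dmult (fun t => x a - m (upd th k t) a) (fun t => f (m (upd th k t) a))).
  + apply dminus; [apply dconst|apply Hm].
  + apply Hg.
Qed.

Lemma first_order {A : finType} {n} (U : vec n -> Prop) (F f : R -> R) (m : vec n -> A -> R) x th k dm dg :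
  is_open U -> is_argmin U (bregD F f m x) th ->
  (forall a, 0 < m th a <= 1) -> (forall y, 0 < y <= 1 -> dpl F y (f y)) ->
  (forall a, is_partial (fun t => m t a) th k (dm a)) ->
  (forall a, is_partial (fun t => f (m t a)) th k (dg a)) ->
  sumR (enum A) (fun a => (x a - m th a) * dg a) = 0.
Proof.
move=> HU [Hth Hmin] Hr HF Hm Hg.
have := fermat _ _ (dbreg F f m x th k dm dg Hr HF Hm Hg).
move=> H. have : - sumR (enum A) (fun a => (x a - m th a) * dg a) = 0.
{ apply H. destruct (line_open U th k HU Hth) as [d [Hd Hin]]. exists d; split => // t Ht.
  rewrite upd0. apply Hmin; auto. }
lra.
Qed.

Lemma second_chain {n} (Th H : vec n -> Prop) (psi : vec n -> vec n) (g : vec n -> R)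
  (Dg : vec n -> vec n) (DDg : 'I_n -> vec n -> vec n) (Dpsi : 'I_n -> vec n -> vec n)
  (DDpsi : 'I_n -> 'I_n -> vec n -> vec n) u0 i' i c :
  is_open H -> H u0 -> (forall u, H u -> Th (psi u)) ->
  (forall th, Th th -> frechet_at g th (Dg th)) ->
  (forall j th, Th th -> frechet_at (fun t => Dg t j) th (DDg j th)) ->
  (forall j u, H u -> frechet_at (fun u => psi u j) u (Dpsi j u)) ->
  (forall j i u, H u -> frechet_at (fun u => Dpsi j u i) u (DDpsi j i u)) ->
  is_partial2 H (fun u => g (psi u)) u0 i' i c ->
  c = sumR (enum 'I_n) (fun j => sumR (enum 'I_n) (fun j' => DDg j (psi u0) j' * Dpsi j' u0 i')
        * Dpsi j u0 i + Dg (psi u0) j * DDpsi j i u0 i').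
Proof.
move=> HH Hu0 Hpsi Fg FDg Fpsi FDpsi P2.
apply (partial2_char H (fun u => g (psi u)) u0 i' i (fun u => sumR (enum 'I_n) (fun j => Dg (psi u) j * Dpsi j u i)))
  => //.
- move=> u Hu. rewrite /is_partial.
  apply (chain g (psi u) (Dg (psi u)) (fun t => psi (upd u i t)) (fun j => Dpsi j u i)).
  + by apply Fg, Hpsi.
  + move=> j. exact (frechet_partial (fun u => psi u j) u (Dpsi j u) i (Fpsi j u Hu)).
  + by rewrite upd0.
- rewrite /is_partial.
  apply (dsum (enum 'I_n) (fun j t => Dg (psi (upd u0 i' t)) j * Dpsi j (upd u0 i' t) i)) => j.
  apply (dval _ _ (vdot (DDg j (psi u0)) (fun j' => Dpsi j' u0 i') * Dpsi j (upd u0 i' 0) i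
     + Dg (psi (upd u0 i' 0)) j * DDpsi j i u0 i')).
  { by rewrite upd0. }
  apply (dmult (fun t => Dg (psi (upd u0 i' t)) j) (fun t => Dpsi j (upd u0 i' t) i)).
  + apply (chain (fun t => Dg t j) (psi u0) (DDg j (psi u0)) (fun t => psi (upd u0 i' t))
       (fun j' => Dpsi j' u0 i')).
    * by apply FDg, Hpsi.
    * move=> j'. exact (frechet_partial (fun u => psi u j') u0 (Dpsi j' u0) i' (Fpsi j' u0 Hu0)).
    * by rewrite upd0.
  + exact (frechet_partial (fun u => Dpsi j u i) u0 (DDpsi j i u0) i' (FDpsi j i u0 Hu0)).
Qed.

Lemma inverse_jac {n} (Th : vec n -> Prop) (eta psi : vec n -> vec n) th j k (Dpsi : vec n) (E : 'I_n -> R) :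
  is_open Th -> Th th -> (forall t, Th t -> psi (eta t) = t) ->
  frechet_at (fun u => psi u j) (eta th) Dpsi ->
  (forall i, is_partial (fun t => eta t i) th k (E i)) ->
  sumR (enum 'I_n) (fun i => Dpsi i * E i) = if j == k then 1 else 0.
Proof.
move=> HT Hth Hpe Fr HE.
have D1 : dpl (fun t => psi (eta (upd th k t)) j) 0 (vdot Dpsi E).
{ apply (chain (fun u => psi u j) (eta th) Dpsi (fun t => eta (upd th k t)) E) => //.
  by rewrite upd0. }
have D2 : dpl (fun t => psi (eta (upd th k t)) j) 0 (if j == k then 1 else 0).
{ apply (dlocext (fun t => upd th k t j)).
  - rewrite /upd. case: (j == k).
    + apply (dval _ _ (0 + 1)); first ring. apply (dplus (fun _ => th j) (fun t => t)); [apply dconst|apply did].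
    + apply (dext (fun _ => th j)); first (move=> t; ring). apply dconst.
  - destruct (line_open Th th k HT Hth) as [d [Hd Hin]]. exists d; split => // t Ht.
    rewrite Hpe; auto. }
exact (uniqueness_limite _ _ _ _ D1 D2).
Qed.

Lemma mat_zero {n} (P E M : 'I_n -> 'I_n -> R) :
  (forall j k, sumR (enum 'I_n) (fun i => P j i * E i k) = if j == k then 1 else 0) ->
  (forall i i', sumR (enum 'I_n) (fun j => sumR (enum 'I_n) (fun j' => P j i * M j j' * P j' i')) = 0) ->
  forall k l, M k l = 0.
Proof.
move=> H1 H2 k l.
pose s := enum 'I_n.
have Hu : uniq s by apply enum_uniq.
have Hm : forall x, x \in s by move=> x; apply mem_enum.
transitivity (sumR s (fun j => sumR s (fun j' =>
   sumR s (fun i => P j i * E i k) * M j j' * sumR s (fun i' => P j' i' * E i' l)))).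
{ rewrite (sumR_ext _ _ (fun j => if j == k then M j l else 0)).
  { by rewrite sumR_delta. }
  move=> j. rewrite (sumR_ext _ _ (fun j' => if j' == l then (if j == k then 1 else 0) * M j j' else 0)).
  { rewrite sumR_delta //. case: (j == k); ring. }
  move=> j'. rewrite H1 H1. case: (j' == l); ring. }
transitivity (sumR s (fun i => sumR s (fun i' => E i k * E i' l *
   sumR s (fun j => sumR s (fun j' => P j i * M j j' * P j' i'))))).
2: { apply sumR_zero => i; apply sumR_zero => i'. rewrite H2; ring. }
transitivity (sumR s (fun j => sumR s (fun j' => sumR s (fun i => sumR s (fun i' =>
   P j i * E i k * M j j' * (P j' i' * E i' l)))))).
{ apply sumR_ext => j; apply sumR_ext => j'. rewrite sumR_scal_r sumR_scal_r.
  apply sumR_ext => i. rewrite sumR_scal_l. apply sumR_ext => i'. ring. }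
transitivity (sumR s (fun j => sumR s (fun i => sumR s (fun i' => sumR s (fun j' =>
   P j i * E i k * M j j' * (P j' i' * E i' l)))))).
{ apply sumR_ext => j. rewrite sumR_swap. apply sumR_ext => i. by rewrite sumR_swap. }
rewrite sumR_swap. apply sumR_ext => i. rewrite sumR_swap. apply sumR_ext => i'.
rewrite sumR_scal_l. apply sumR_ext => j. rewrite sumR_scal_l. apply sumR_ext => j'. ring.
Qed.

Lemma twice_choice {X : Type} {n} (U : vec n -> Prop) (g : X -> vec n -> R) :
  (forall x, twice_diff_on U (g x)) ->
  exists D : X -> vec n -> vec n, exists DD : X -> 'I_n -> vec n -> vec n,
   (forall x th, U th -> frechet_at (g x) th (D x th)) /\
   (forall x j th, U th -> frechet_at (fun t => D x t j) th (DD x j th)).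
Proof.
move=> Hg.
have : forall x, exists p : (vec n -> vec n) * ('I_n -> vec n -> vec n),
   (forall th, U th -> frechet_at (g x) th (p.1 th)) /\
   (forall j th, U th -> frechet_at (fun t => p.1 t j) th (p.2 j th)).
{ move=> x. destruct (Hg x) as [dg [H1 H2]].
  destruct (functional_choice (fun k (d : vec n -> vec n) => forall th, U th -> frechet_at (fun t => dg t k) th (d th)) H2) as [dd Hdd].
  by exists (dg, dd). }
move=> /functional_choice [p Hp].
exists (fun x => (p x).1), (fun x => (p x).2). split => x; apply Hp.
Qed.

Lemma inX_bounds {A : finType} (x : A -> R) a : inX x -> 0 < x a <= 1.
Proof.
move=> [Hp Hs]. split; first apply Hp. rewrite -Hs. apply sumR_le_mem.
- move=> y; left; apply Hp.
- apply mem_enum.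
Qed.

Lemma partial2_uniq {n} (U : vec n -> Prop) g th k l v w :
  is_open U -> U th -> is_partial2 U g th k l v -> is_partial2 U g th k l w -> v = w.
Proof.
move=> HU Hth Hv [h [Hh Hp]]. exact (partial2_char U g th k l h v w HU Hth Hh Hp Hv).
Qed.

Theorem mainTheorem7
  (A : finType) (n : nat)
  (Theta : vec n -> Prop) (m : vec n -> A -> R)
  (F f df : R -> R)
  (* setting *)
  (HThopen : is_open Theta)
  (HmX : forall th, Theta th -> inX (m th))
  (Hminj : forall th th', Theta th -> Theta th' -> m th = m th' -> th = th')
  (Hm2 : forall a, twice_diff_on Theta (fun th => m th a))
  (HFconv : strictly_convex_on01 F)
  (HFf : forall y, 0 < y <= 1 -> derivable_pt_lim F y (f y))
  (Hfdf : forall y, 0 < y <= 1 -> derivable_pt_lim f y (df y))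
  (Hmin : forall x, inX x -> exists! t, is_argmin Theta (bregD F f m x) t)
  (* the second derivatives of th |-> f(m_th(a)) used in the statement exist *)
  (Hfm2 : forall a, twice_diff_on Theta (fun th => f (m th a)))
  (* reparametrization eta with inverse psi, eta : Theta -> H *)
  (H : vec n -> Prop) (eta psi : vec n -> vec n)
  (HHopen : is_open H)
  (Heta_in : forall th, Theta th -> H (eta th) /\ psi (eta th) = th)
  (Hpsi_in : forall u, H u -> Theta (psi u) /\ eta (psi u) = u)
  (Heta2 : forall j, twice_diff_on Theta (fun th => eta th j))
  (Hpsi2 : forall j, twice_diff_on H (fun u => psi u j))
  (* d^2/deta^k deta^l f(m_th(a)) does not depend on a *)
  (Hconst : forall th, Theta th -> forall k l, exists c, forall a,
      is_partial2 H (fun u => f (m (psi u) a)) (eta th) k l c) :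
  (forall th x k l (v : A -> R), Theta th -> in_fiber Theta F f m th x ->
     (forall a, is_partial2 Theta (fun t => f (m t a)) th k l (v a)) ->
     sumR (enum A) (fun a => (x a - m th a) * v a) = 0)
  /\ gen_exp_family Theta F f m
  /\ (forall th x k l (dk dl : A -> R), Theta th -> in_fiber Theta F f m th x ->
     (forall a, is_partial (fun t => m t a) th k (dk a)) ->
     (forall a, is_partial (fun t => m t a) th l (dl a)) ->
     fisher_is Theta F f m x k l
       (sumR (enum A) (fun a => df (m th a) * dk a * dl a))).
Proof.
destruct (twice_choice Theta (fun a th => m th a) Hm2) as [Dm [DDm [FDm _]]].
destruct (twice_choice Theta (fun a th => f (m th a)) Hfm2) as [Dg [DDg [FDg FDDg]]].
destruct (twice_choice Theta (fun j th => eta th j) Heta2) as [De [DDe [FDe _]]].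
destruct (twice_choice H (fun j u => psi u j) Hpsi2) as [Dp [DDp [FDp FDDp]]].
have Pm : forall a th k, Theta th -> is_partial (fun t => m t a) th k (Dm a th k).
{ move=> a th k Hth. exact (frechet_partial _ _ _ k (FDm a th Hth)). }
have Pg : forall a th k, Theta th -> is_partial (fun t => f (m t a)) th k (Dg a th k).
{ move=> a th k Hth. exact (frechet_partial _ _ _ k (FDg a th Hth)). }
have Hr : forall th, Theta th -> forall a, 0 < m th a <= 1.
{ move=> th Hth a. apply inX_bounds, HmX, Hth. }
have fib : forall th x, Theta th -> in_fiber Theta F f m th x ->
   is_argmin Theta (bregD F f m x) th /\ inX x.
{ move=> th x Hth [HX [t [Ha Hmt]]]. have E := Hminj t th (proj1 Ha) Hth Hmt. subst t. by split. }
have KEY : forall th x, Theta th -> in_fiber Theta F f m th x -> forall j j',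
   sumR (enum A) (fun a => (x a - m th a) * DDg a j th j') = 0.
{ move=> th x Hth Hfib. destruct (fib th x Hth Hfib) as [Hamin HX].
  have S1 : forall j, sumR (enum A) (fun a => (x a - m th a) * Dg a th j) = 0.
  { move=> j. apply (first_order Theta F f m x th j (fun a => Dm a th j) (fun a => Dg a th j)) => //.
    - by apply Hr.
    - move=> a; by apply Pm.
    - move=> a; by apply Pg. }
  destruct (Heta_in th Hth) as [Hu0 Hpe].
  apply (mat_zero (fun j i => Dp j (eta th) i) (fun i k => De i th k)
     (fun j j' => sumR (enum A) (fun a => (x a - m th a) * DDg a j th j'))).
  - move=> j k. apply (inverse_jac Theta eta psi th j k (Dp j (eta th)) (fun i => De i th k)) => //.
    + move=> t Ht. exact (proj2 (Heta_in t Ht)).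
    + by apply FDp.
    + move=> i. exact (frechet_partial _ _ _ k (FDe i th Hth)).
  - move=> i i'. destruct (Hconst th Hth i' i) as [c Hc].
    have Hca : forall a, c = sumR (enum 'I_n) (fun j => sumR (enum 'I_n)
        (fun j' => DDg a j th j' * Dp j' (eta th) i') * Dp j (eta th) i
        + Dg a th j * DDp j i (eta th) i').
    { move=> a.
      have := second_chain Theta H psi (fun t => f (m t a)) (Dg a) (DDg a) Dp DDp (eta th) i' i c
        HHopen Hu0 (fun u Hu => proj1 (Hpsi_in u Hu)) (FDg a) (FDDg a) FDp FDDp (Hc a).
      by rewrite Hpe. }
    have Sw : sumR (enum A) (fun a => (x a - m th a) * c) = 0.
    { rewrite -sumR_scal_r sumR_minus. destruct HX as [_ ->]. destruct (HmX th Hth) as [_ ->]. ring. }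
    have E : sumR (enum A) (fun a => (x a - m th a) * c) =
      sumR (enum 'I_n) (fun j => sumR (enum 'I_n) (fun j' => Dp j (eta th) i *
          sumR (enum A) (fun a => (x a - m th a) * DDg a j th j') * Dp j' (eta th) i'))
      + sumR (enum 'I_n) (fun j => sumR (enum A) (fun a => (x a - m th a) * Dg a th j)
          * DDp j i (eta th) i').
    { rewrite -sumR_plus.
      transitivity (sumR (enum A) (fun a => sumR (enum 'I_n) (fun j => (x a - m th a) *
        (sumR (enum 'I_n) (fun j' => DDg a j th j' * Dp j' (eta th) i') * Dp j (eta th) i
        + Dg a th j * DDp j i (eta th) i')))).
      { apply sumR_ext => a. by rewrite {1}(Hca a) sumR_scal_l. }
      rewrite sumR_swap. apply sumR_ext => j.
      transitivity (sumR (enum A) (fun a => sumR (enum 'I_n) (fun j' =>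
          (x a - m th a) * DDg a j th j' * Dp j' (eta th) i' * Dp j (eta th) i))
        + sumR (enum A) (fun a => (x a - m th a) * Dg a th j * DDp j i (eta th) i')).
      { rewrite -sumR_plus. apply sumR_ext => a. rewrite Rmult_plus_distr_l. f_equal.
        - rewrite -Rmult_assoc sumR_scal_l sumR_scal_r. apply sumR_ext => j'; ring.
        - ring. }
      f_equal.
      - rewrite sumR_swap. apply sumR_ext => j'. rewrite sumR_scal_l sumR_scal_r.
        apply sumR_ext => a; ring.
      - rewrite sumR_scal_r. apply sumR_ext => a; ring. }
    have Z : sumR (enum 'I_n) (fun j => sumR (enum A) (fun a => (x a - m th a) * Dg a th j)
          * DDp j i (eta th) i') = 0.
    { apply sumR_zero => j. rewrite S1; ring. }
    lra. }
have Q3 : forall th x k l, Theta th -> in_fiber Theta F f m th x ->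
   is_partial2 Theta (bregD F f m x) th k l
     (sumR (enum A) (fun a => df (m th a) * Dm a th k * Dm a th l)).
{ move=> th x k l Hth Hfib.
  have Hdg : forall a, Dg a th l = df (m th a) * Dm a th l.
  { move=> a. apply: (uniq_partial (fun t => f (m t a)) th l); first by apply Pg.
    rewrite /is_partial. apply (dcomp f (fun t => m (upd th l t) a)); first by apply Pm.
    rewrite upd0. apply Hfdf, Hr, Hth. }
  exists (fun t => - sumR (enum A) (fun a => (x a - m t a) * Dg a t l)). split.
  - move=> th' Hth'. apply (dbreg F f m x th' l (fun a => Dm a th' l)).
    + by apply Hr.
    + exact HFf.
    + move=> a; by apply Pm.
    + move=> a; by apply Pg.
  - rewrite /is_partial.
    apply (dval _ _ (- sumR (enum A) (fun a => (0 - Dm a th k) * Dg a (upd th k 0) l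
         + (x a - m (upd th k 0) a) * DDg a l th k))).
    { rewrite upd0 -sumR_opp.
      transitivity (sumR (enum A) (fun a => Dm a th k * Dg a th l)
        - sumR (enum A) (fun a => (x a - m th a) * DDg a l th k)).
      { rewrite -sumR_minus. apply sumR_ext => a; ring. }
      rewrite KEY // Rminus_0_r. apply sumR_ext => a. rewrite Hdg; ring. }
    apply dopp.
    apply (dsum (enum A) (fun a t => (x a - m (upd th k t) a) * Dg a (upd th k t) l)) => a.
    apply (dmult (fun t => x a - m (upd th k t) a) (fun t => Dg a (upd th k t) l)).
    + apply dminus; [apply dconst|by apply Pm].
    + exact (frechet_partial _ _ _ k (FDDg a l th Hth)). }
split; [|split].
- move=> th x k l v Hth Hfib Hv.
  rewrite (sumR_ext _ _ (fun a => (x a - m th a) * DDg a l th k)).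
  { by apply KEY. }
  move=> a. f_equal.
  apply (partial2_char Theta (fun t => f (m t a)) th k l (fun t => Dg a t l)) => //.
  + move=> th' Hth'; by apply Pg.
  + exact (frechet_partial _ _ _ k (FDDg a l th Hth)).
- move=> th x y k l v w Hth Hx Hy [t [Ht Hv]] [t' [Ht' Hw]].
  destruct (fib th x Hth Hx) as [Hax HXx]. destruct (fib th y Hth Hy) as [Hay HXy].
  destruct (Hmin x HXx) as [t0 [_ U0]].
  have E1 : t = th by rewrite -(U0 t Ht) -(U0 th Hax).
  destruct (Hmin y HXy) as [t1 [_ U1]].
  have E2 : t' = th by rewrite -(U1 t' Ht') -(U1 th Hay).
  subst t t'.
  have := partial2_uniq Theta _ th k l _ _ HThopen Hth Hv (Q3 th x k l Hth Hx).
  have := partial2_uniq Theta _ th k l _ _ HThopen Hth Hw (Q3 th y k l Hth Hy).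
  move=> -> ->. done.
- move=> th x k l dk dl Hth Hfib Hdk Hdl.
  exists th. split; first exact (proj1 (fib th x Hth Hfib)).
  rewrite (sumR_ext _ _ (fun a => df (m th a) * Dm a th k * Dm a th l)).
  { by apply Q3. }
  move=> a. rewrite (uniq_partial _ _ _ _ _ (Hdk a) (Pm a th k Hth)).
  by rewrite (uniq_partial _ _ _ _ _ (Hdl a) (Pm a th l Hth)).
Qed.
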